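(* Let $m\ge3$ be odd and $n\ge2$. Suppose $\mathcal{A}=\sum_{l=1}^r(\mathbf{u}^{(l)})^m$ is a strongly completely positive tensor in which every vector $\mathbf{u}^{(1)},\dots,\mathbf{u}^{(r)}\in\mathbb{R}^n$ is positive (all components $>0$). Then $\mathcal{A}$ is strongly positive definite.
   Context: For $\mathbf{u}\in\mathbb{R}^n$, $\mathbf{u}^m$ is the tensor with entries $u_{i_1}\cdots u_{i_m}$. A tensor $\mathcal{A}=\sum_{l=1}^r(\mathbf{u}^{(l)})^m$ with nonnegative $\mathbf{u}^{(l)}$ is completely positive; it is strongly completely positive if moreover $r\ge n$ and $\{\mathbf{u}^{(1)},\dots,\mathbf{u}^{(r)}\}$ spans $\mathbb{R}^n$. For $\mathbf{x}\in\mathbb{R}^n$, $\mathcal{A}\mathbf{x}^{m-1}$ is the vector with $i$th component $\sum_{i_2,\dots,i_m}a_{ii_2\dots i_m}x_{i_2}\cdots x_{i_m}$. For odd $m$ and symmetric $\mathcal{A}$, $\mathcal{A}$ is strongly positive definite if $\mathcal{A}\mathbf{x}^{m-1}>\mathbf{0}$ componentwise for all nonzero $\mathbf{x}\in\mathbb{R}^n$. *)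

(* Defs.v *)
From mathcomp Require Import all_boot all_order all_algebra.
From mathcomp Require Import fingroup perm.
Set Implicit Arguments. Unset Strict Implicit. Unset Printing Implicit Defensive.
Import Order.TTheory GRing.Theory Num.Theory.
Local Open Scope ring_scope.

(* A real m-th order n-dimensional tensor: entries indexed by functions 'I_m -> 'I_n
   (entry a_{i_1 ... i_m} is A [ffun k => i_{k+1}]). Vectors in R^n are 'rV[R]_n. *)
Definition tensor (R : realFieldType) (m n : nat) := {ffun 'I_m -> 'I_n} -> R.

Definition rank1_pow (R : realFieldType) (m n : nat) (u : 'rV[R]_n) : tensor R m n :=
  fun f => \prod_(k < m) u 0 (f k).

Definition sum_rank1 (R : realFieldType) (m n r : nat) (u : 'I_r -> 'rV[R]_n)
  : tensor R m n := fun f => \sum_(l < r) @rank1_pow R m n (u l) f.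

(* A x^{m-1}: i-th component sum_{i_2..i_m} a_{i i_2 .. i_m} x_{i_2} ... x_{i_m};
   the first index is position 0 of 'I_m. *)
Definition tapply (R : realFieldType) (m n : nat) (A : tensor R m n) (x : 'rV[R]_n)
  : 'rV[R]_n :=
  \row_(i < n) \sum_(f in {ffun 'I_m -> 'I_n} | [forall k : 'I_m,
        (nat_of_ord k == 0)%N ==> (f k == i)])
      A f * \prod_(k < m | (nat_of_ord k != 0)%N) x 0 (f k).

Definition is_symmetric (R : realFieldType) (m n : nat) (A : tensor R m n) : Prop :=
  forall (f : {ffun 'I_m -> 'I_n}) (s : {perm 'I_m}), A [ffun k => f (s k)] = A f.

(* completely positive decomposition with nonnegative u^(l), and strongly:
   r >= n and {u^(1),...,u^(r)} spans R^n (the r x n matrix of rows is row-full) *)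
Definition strongly_cp_decomp (R : realFieldType) (m n r : nat)
  (u : 'I_r -> 'rV[R]_n) : Prop :=
  (forall l j, 0 <= u l 0 j) /\ (n <= r)%N /\ row_full (\matrix_(l < r) u l).

Definition strongly_pd (R : realFieldType) (m n : nat) (A : tensor R m n) : Prop :=
  is_symmetric A /\
  forall x : 'rV[R]_n, x != 0 -> forall i, 0 < tapply A x 0 i.

(* Main.v *)
Require Import Defs.
From mathcomp Require Import all_boot all_order all_algebra.
From mathcomp Require Import fingroup perm.
Import Order.TTheory GRing.Theory Num.Theory.
Local Open Scope ring_scope.

Lemma key (R : realFieldType) (m' n : nat) (v x : 'rV[R]_n) (i : 'I_n) :
 \sum_(f in {ffun 'I_m'.+1 -> 'I_n} | [forall k : 'I_m'.+1, (nat_of_ord k == 0)%N ==> (f k == i)])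
   (\prod_(k < m'.+1) v 0 (f k)) * \prod_(k < m'.+1 | (nat_of_ord k != 0)%N) x 0 (f k)
 = v 0 i * (\sum_j v 0 j * x 0 j) ^+ m'.
Proof.
pose F := fun (k : 'I_m'.+1) (j : 'I_n) =>
  if (nat_of_ord k == 0)%N then (j == i)%:R * v 0 j else v 0 j * x 0 j.
have H1 : \prod_k \sum_j F k j = v 0 i * (\sum_j v 0 j * x 0 j) ^+ m'.
  rewrite big_ord_recl /F /=.
  rewrite (bigD1 i) //= eqxx mul1r big1 ?addr0; last first.
    by move=> j /negbTE ->; rewrite mul0r.
  congr (_ * _).
  by rewrite prodr_const card_ord.
rewrite -H1 bigA_distr_bigA /= big_mkcond /=.
apply: eq_bigr => f _.
rewrite [RHS]big_ord_recl /F /=.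
have -> : [forall k : 'I_m'.+1, (nat_of_ord k == 0)%N ==> (f k == i)] = (f ord0 == i).
  case: eqVneq => [h|h].
    apply/forallP => k; apply/implyP => /eqP k0.
    have -> : k = ord0 by apply: val_inj; rewrite /= k0.
    by rewrite h.
  apply/negbTE/forallP => /(_ ord0) /=; by rewrite (negbTE h).
case: eqVneq => [h|h]; last by rewrite !mul0r.
rewrite mul1r big_ord_recl [X in _ * X]big_mkcond big_ord_recl /=.
by rewrite mul1r big_split /= h mulrA.
Qed.

Theorem corollary3p5 (R : realFieldType) (m n r : nat)
  (hm3 : (3 <= m)%N) (hmodd : odd m) (hn2 : (2 <= n)%N)
  (u : 'I_r -> 'rV[R]_n)
  (hscp : @strongly_cp_decomp R m n r u)
  (hpos : forall l j, 0 < u l 0 j) :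
  @strongly_pd R m n (@sum_rank1 R m n r u).
Proof.
case: hscp => _ [_ hfull].
split.
  move=> f s; rewrite /sum_rank1; apply: eq_bigr => l _; rewrite /rank1_pow.
  rewrite [RHS](reindex_inj (@perm_inj _ s)).
  by apply: eq_bigr => k _; rewrite ffunE.
case: m hm3 hmodd => // m' _ hmodd.
move=> x x0 i.
rewrite /tapply mxE /sum_rank1.
under eq_bigr do rewrite mulr_suml.
rewrite exchange_big /=.
under eq_bigr do rewrite /rank1_pow key.
have hev : ~~ odd m' by move: hmodd => /=; case: (odd m').
set s := fun l => \sum_j u l 0 j * x 0 j.
case: (boolP [exists l, s l != 0]) => [/existsP [l0 hl0] | /existsPn hall].
  rewrite (bigD1 l0) //=.
  apply: ltr_wpDr.
    apply: sumr_ge0 => l _; apply: mulr_ge0; first exact: ltW.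
    exact: exprn_even_ge0.
  apply: mulr_gt0 => //.
  by rewrite exprn_even_gt0 // hl0 orbT.
exfalso; move/negP: x0; apply.
move/row_fullP: hfull => [B hB].
have hM : (\matrix_(l < r) u l) *m x^T = 0.
  apply/matrixP => l j; rewrite !mxE (ord1 j).
  transitivity (s l); last by apply/eqP; exact: negbNE (hall l).
  by apply: eq_bigr => k _; rewrite !mxE.
have : x^T = 0 by rewrite -[x^T]mul1mx -hB -mulmxA hM mulmx0.
by move/(congr1 trmx); rewrite trmxK trmx0 => ->.
Qed.
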